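(* Let $R$ be a commutative ring, $N=\mathrm{N}_3(R)$, $J\subseteq N$ the ideal of matrices with zero diagonal, and $T=N/J$. Let $\alpha,\beta\in H^1(N,T)$ be the classes of the derivations $N\to T$ sending $\begin{pmatrix}a&b&c\\0&a&d\\0&0&a\end{pmatrix}$ to $b\,e$ and to $d\,e$ respectively, where $e\in T$ is the image of $I_3$. Then $H^*(N,T)$, with the cup product, is a graded associative $R$-algebra, and the induced map $R\langle\alpha,\beta\rangle/(\alpha\beta)\to H^*(N,T)$ is an isomorphism of graded $R$-algebras, where $R\langle\alpha,\beta\rangle$ is the free associative algebra on $\alpha,\beta$ in degree $1$ and $(\alpha\beta)$ the two-sided ideal generated by $\alpha\beta$. In particular $H^m(N,T)$ is free with basis $\{\beta^i\alpha^j\mid i,j\ge0,\ i+j=m\}$.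
   Context: $\mathrm{N}_3(R)=\left\{\begin{pmatrix}a&b&c\\0&a&d\\0&0&a\end{pmatrix}\mid a,b,c,d\in R\right\}$. $T=N/J\cong R$ is an $N$-bimodule on which a matrix acts on either side by multiplication by its diagonal entry $a$; $T\otimes_NT\cong T$, so the cup product $H^p(N,T)\otimes H^q(N,T)\to H^{p+q}(N,T\otimes_NT)\cong H^{p+q}(N,T)$, $(f\cup g)(a_1,\dots,a_{p+q})=f(a_1,\dots,a_p)\otimes g(a_{p+1},\dots,a_{p+q})$ on Hochschild cochains, makes $H^*(N,T)$ a graded associative algebra. *)

(* Defs.v *)
From HB Require Import structures.
From mathcomp Require Import all_boot all_order all_algebra.
Set Implicit Arguments. Unset Strict Implicit. Unset Printing Implicit Defensive.
Import Order.TTheory GRing.Theory Num.Theory.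
Local Open Scope ring_scope.

Section N3Coh.
Variable R : comPzRingType.

Definition i0 : 'I_3 := @Ordinal 3 0 isT.
Definition i1 : 'I_3 := @Ordinal 3 1 isT.
Definition i2 : 'I_3 := @Ordinal 3 2 isT.

Definition inN3 (M : 'M[R]_3) : bool :=
  [&& M i1 i1 == M i0 i0, M i2 i2 == M i0 i0,
      M i1 i0 == 0, M i2 i0 == 0 & M i2 i1 == 0].

(* the image in T = N/J ~ R : the common diagonal entry a *)
Definition diagN (M : 'M[R]_3) : R := M i0 i0.

Definition Nseq (n : nat) (s : seq 'M[R]_3) : Prop := size s = n /\ all inN3 s.

(* a (T-valued) n-cochain is represented by a function on sequences; only its
   values on length-n sequences of elements of N matter *)
Definition cochainT := seq 'M[R]_3 -> R.

Definition multilinear (n : nat) (f : cochainT) : Prop :=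
  forall (k : nat) (s : seq 'M[R]_3) (x y : 'M[R]_3) (r : R),
    (k < n)%N -> Nseq n s -> inN3 x -> inN3 y ->
    f (set_nth 0 s k (r *: x + y)) = r * f (set_nth 0 s k x) + f (set_nth 0 s k y).

Definition cochain (n : nat) (f : cochainT) : Prop := multilinear n f.

(* (a_1,...,a_{n+1}) |-> (a_1,...,a_i a_{i+1},...,a_{n+1}),  i counted from 0 *)
Definition mulat (i : nat) (s : seq 'M[R]_3) : seq 'M[R]_3 :=
  take i s ++ (nth 0 s i *m nth 0 s i.+1) :: drop i.+2 s.

Definition hoch_d (n : nat) (f : cochainT) : cochainT :=
  fun s => diagN (nth 0 s 0) * f (behead s)
         + \sum_(i < n) (-1) ^+ i.+1 * f (mulat i s)
         + (-1) ^+ n.+1 * f (take n s) * diagN (nth 0 s n).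

Definition cocycle (n : nat) (f : cochainT) : Prop :=
  cochain n f /\ forall s, Nseq n.+1 s -> hoch_d n f s = 0.

Definition coboundary (n : nat) (f : cochainT) : Prop :=
  match n with
  | 0%N => forall s, Nseq 0 s -> f s = 0
  | n'.+1 => exists g, cochain n' g /\ forall s, Nseq n s -> f s = hoch_d n' g s
  end.

Definition cup (p : nat) (f g : cochainT) : cochainT :=
  fun s => f (take p s) * g (drop p s).

Definition one_cochain : cochainT := fun _ => 1.

(* the derivations  M |-> b e  and  M |-> d e  (e |-> 1 under T ~ R) *)
Definition alphaC : cochainT := fun s => (nth 0 s 0) i0 i1.
Definition betaC : cochainT := fun s => (nth 0 s 0) i1 i2.

(* words in the free algebra R<alpha,beta>: true = alpha, false = beta;
   the image of a word is the iterated cup product of its letters *)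
Definition letterC (b : bool) : cochainT := if b then alphaC else betaC.
Definition wordC (w : seq bool) : cochainT :=
  foldr (fun b acc => cup 1 (letterC b) acc) one_cochain w.

(* the degree-m map R<alpha,beta>_m -> C^m, coefficients on words of length m *)
Definition PhiC (m : nat) (c : m.-tuple bool -> R) : cochainT :=
  fun s => \sum_(w : m.-tuple bool) c w * wordC w s.

(* degree-m component of the two-sided ideal (alpha beta): R-span of the
   words u alpha beta v *)
Definition in_ideal_ab (m : nat) (c : m.-tuple bool -> R) : Prop :=
  forall w : m.-tuple bool, c w != 0 -> infix [:: true; false] (tval w).

Definition ba_word (i j : nat) : seq bool := nseq i false ++ nseq j true.

End N3Coh.

(* Main.v *)
Require Import Defs.
From HB Require Import structures.
From mathcomp Require Import all_boot all_order all_algebra ring.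
Import Order.TTheory GRing.Theory Num.Theory.
Local Open Scope ring_scope.

Module Aux.
Set Implicit Arguments. Unset Strict Implicit. Unset Printing Implicit Defensive.
Section Mat.
Variable R : comPzRingType.
Notation M := ('M[R]_3).

Lemma ord3 (i : 'I_3) : i = i0 \/ i = i1 \/ i = i2.
Proof.
case: i => [[|[|[|k]]] Hk].
- by left; apply: val_inj.
- by right; left; apply: val_inj.
- by right; right; apply: val_inj.
- by [].
Qed.

Definition mI : M := 1%:M.
Definition mX : M := delta_mx i0 i1.
Definition mY : M := delta_mx i1 i2.
Definition mZ : M := delta_mx i0 i2.

Lemma inN3P (x : M) : inN3 x ->
  [/\ x i1 i1 = x i0 i0, x i2 i2 = x i0 i0, x i1 i0 = 0, x i2 i0 = 0 & x i2 i1 = 0].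
Proof. by case/and5P=> /eqP ? /eqP ? /eqP ? /eqP ? /eqP ?. Qed.

Lemma mulE (x y : M) i j : (x *m y) i j = x i i0 * y i0 j + x i i1 * y i1 j + x i i2 * y i2 j.
Proof. rewrite mxE !big_ord_recl big_ord0 addr0 addrA. have -> : lift ord0 (lift ord0 (ord0 : 'I_1)) = i2 by apply: val_inj. have -> : lift ord0 (ord0 : 'I_2) = i1 by apply: val_inj. have -> : (ord0 : 'I_3) = i0 by apply: val_inj. by []. Qed.

Ltac mcases := apply/matrixP => i j; have [->|[->|->]] := ord3 i; have [->|[->|->]] := ord3 j.

Lemma decompN (x : M) : inN3 x ->
  x = x i0 i0 *: mI + (x i0 i1 *: mX + (x i0 i2 *: mZ + (x i1 i2 *: mY + 0))).
Proof.
move/inN3P=> [h1 h2 h3 h4 h5].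
by mcases; rewrite !mxE /= ?h1 ?h2 ?h3 ?h4 ?h5; ring.
Qed.

Lemma mulXN (x : M) : inN3 x -> mX *m x = x i0 i0 *: mX + x i1 i2 *: mZ.
Proof.
move/inN3P=> [h1 h2 h3 h4 h5].
by mcases; rewrite !mulE !mxE /= ?h1 ?h2 ?h3 ?h4 ?h5; ring.
Qed.

Lemma mulZN (x : M) : inN3 x -> mZ *m x = x i0 i0 *: mZ.
Proof.
move/inN3P=> [h1 h2 h3 h4 h5].
by mcases; rewrite !mulE !mxE /= ?h1 ?h2 ?h3 ?h4 ?h5; ring.
Qed.

Lemma mulYN (x : M) : inN3 x -> mY *m x = x i0 i0 *: mY.
Proof.
move/inN3P=> [h1 h2 h3 h4 h5].
by mcases; rewrite !mulE !mxE /= ?h1 ?h2 ?h3 ?h4 ?h5; ring.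
Qed.

Lemma mulIN (x : M) : mI *m x = x.
Proof. by rewrite mul1mx. Qed.

Lemma mulYY : mY *m mY = 0.
Proof. by mcases; rewrite !mulE !mxE /=; ring. Qed.
Lemma mulYX : mY *m mX = 0.
Proof. by mcases; rewrite !mulE !mxE /=; ring. Qed.
Lemma mulXX : mX *m mX = 0.
Proof. by mcases; rewrite !mulE !mxE /=; ring. Qed.

Lemma inN3_lin (r : R) (x y : M) : inN3 x -> inN3 y -> inN3 (r *: x + y).
Proof.
move/inN3P=> [h1 h2 h3 h4 h5] /inN3P [g1 g2 g3 g4 g5].
by apply/and5P; split; apply/eqP; rewrite !mxE ?h1 ?h2 ?h3 ?h4 ?h5 ?g1 ?g2 ?g3 ?g4 ?g5 //; ring.
Qed.

Lemma inN3_0 : inN3 (0 : M). Proof. by apply/and5P; split; rewrite !mxE. Qed.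
Lemma inN3_I : inN3 mI. Proof. by apply/and5P; split; rewrite !mxE. Qed.
Lemma inN3_X : inN3 mX. Proof. by apply/and5P; split; rewrite !mxE. Qed.
Lemma inN3_Y : inN3 mY. Proof. by apply/and5P; split; rewrite !mxE. Qed.
Lemma inN3_Z : inN3 mZ. Proof. by apply/and5P; split; rewrite !mxE. Qed.

Lemma inN3_mul (x y : M) : inN3 x -> inN3 y -> inN3 (x *m y).
Proof.
move/inN3P=> [h1 h2 h3 h4 h5] /inN3P [g1 g2 g3 g4 g5].
by apply/and5P; split; apply/eqP; rewrite !mulE ?h1 ?h2 ?h3 ?h4 ?h5 ?g1 ?g2 ?g3 ?g4 ?g5 //; ring.
Qed.


Lemma set_nth_id (s : seq M) k : (k < size s)%N -> set_nth 0 s k (nth 0 s k) = s.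
Proof.
elim: s k => [|x s IH] [|k] //= Hk; by rewrite IH.
Qed.

Lemma take_set_nth_lt (s : seq M) p k v : (k < p)%N -> (k < size s)%N ->
  take p (set_nth 0 s k v) = set_nth 0 (take p s) k v.
Proof.
elim: p s k => [|p IH] s k //.
case: s => [|x s]; case: k => [|k] Hk //= Hs.
by rewrite IH.
Qed.

Lemma drop_set_nth_lt (s : seq M) p k v : (k < p)%N -> (k < size s)%N ->
  drop p (set_nth 0 s k v) = drop p s.
Proof.
elim: p s k => [|p IH] s k //.
case: s => [|x s]; case: k => [|k] Hk //= Hs.
by rewrite IH.
Qed.

Lemma take_set_nth_ge (s : seq M) p k v : (p <= k)%N -> (k < size s)%N ->
  take p (set_nth 0 s k v) = take p s.
Proof.
elim: p s k => [|p IH] s k; first by rewrite !take0.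
case: s => [|x s]; case: k => [|k] Hk //= Hs.
by rewrite IH.
Qed.

Lemma drop_set_nth_ge (s : seq M) p k v : (p <= k)%N -> (k < size s)%N ->
  drop p (set_nth 0 s k v) = set_nth 0 (drop p s) (k - p) v.
Proof.
elim: p s k => [|p IH] s k; first by rewrite !drop0 subn0.
case: s => [|x s]; case: k => [|k] Hk //= Hs.
by rewrite IH.
Qed.

Lemma mulat0 (x y : M) t : mulat 0 [:: x, y & t] = (x *m y) :: t.
Proof. by rewrite /mulat /= drop0. Qed.

Lemma mulatS i (x : M) s : mulat i.+1 (x :: s) = x :: mulat i s.
Proof. by []. Qed.

Lemma take_mulat_lt (s : seq M) i p : (i < p)%N ->
  take p (mulat i s) = mulat i (take p.+1 s).
Proof.
elim: i p s => [|i IH] [|p] s //= Hip.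
  by case: s => [|x [|y t]]; rewrite /mulat /= ?take0 ?drop0.
case: s => [|x s]; first by rewrite /mulat /=.
by rewrite /= !mulatS /= IH.
Qed.

Lemma drop_mulat_lt (s : seq M) i p : (i < p)%N ->
  drop p (mulat i s) = drop p.+1 s.
Proof.
elim: i p s => [|i IH] [|p] s //= Hip.
  by case: s => [|x [|y t]]; rewrite /mulat /= ?take0 ?drop0.
case: s => [|x s]; first by rewrite /mulat /=.
by rewrite mulatS /= IH.
Qed.

Lemma take_mulat_ge (s : seq M) j p : (p <= size s)%N ->
  take p (mulat (p + j) s) = take p s.
Proof.
elim: p s => [|p IH] s; first by rewrite !take0.
case: s => [|x s] // Hp.
by rewrite addSn mulatS /= IH.
Qed.

Lemma drop_mulat_ge (s : seq M) j p : (p <= size s)%N ->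
  drop p (mulat (p + j) s) = mulat j (drop p s).
Proof.
elim: p s => [|p IH] s; first by rewrite !drop0 add0n.
case: s => [|x s] // Hp.
by rewrite addSn mulatS /= IH.
Qed.

Lemma drop_take_add (s : seq M) p q : drop p (take (p + q) s) = take q (drop p s).
Proof. by rewrite take_drop addnC. Qed.

Lemma NseqCi n (x : M) s : Nseq n.+1 (x :: s) -> inN3 x /\ Nseq n s.
Proof. by rewrite /Nseq /=; case=> [[->]] /andP [-> ->]. Qed.

Lemma NseqC n (x : M) s : inN3 x -> Nseq n s -> Nseq n.+1 (x :: s).
Proof. by rewrite /Nseq /= => -> [-> ->]. Qed.

Lemma Nseq_take p n (s : seq M) : (p <= n)%N -> Nseq n s -> Nseq p (take p s).
Proof.
move=> Hp [Hs Ha]; split; first by rewrite size_takel // Hs.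
by move: Ha; rewrite -{1}(cat_take_drop p s) all_cat => /andP [].
Qed.

Lemma Nseq_drop p n (s : seq M) : Nseq (p + n) s -> Nseq n (drop p s).
Proof.
move=> [Hs Ha]; split; first by rewrite size_drop Hs addKn.
by move: Ha; rewrite -{1}(cat_take_drop p s) all_cat => /andP [].
Qed.

Lemma Nseq_behead n (s : seq M) : Nseq n.+1 s -> Nseq n (behead s).
Proof. by case: s => [|x s]; [case | case/NseqCi]. Qed.

Lemma Nseq_mulat n i (s : seq M) : (i < n)%N -> Nseq n.+1 s -> Nseq n (mulat i s).
Proof.
elim: i n s => [|i IH] [|n] s // Hi HS.
  case: s HS => [|x [|y t]] HS; try by case: HS.
  move: HS => /NseqCi [Hx] /NseqCi [Hy Ht].
  by rewrite mulat0; apply: NseqC => //; apply: inN3_mul.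
case: s HS => [|x s] HS; first by case: HS.
by case/NseqCi: HS => Hx Hs; rewrite mulatS; apply: NseqC => //; apply: IH.
Qed.

Lemma Nseq_nth n (s : seq M) k : Nseq n s -> inN3 (nth 0 s k).
Proof.
move=> [_ Ha]; case: (ltnP k (size s)) => Hk.
  by apply: (all_nthP 0 Ha).
by rewrite nth_default //; apply: inN3_0.
Qed.

Implicit Types f g h : cochainT R.

Lemma cochain_nth0 n f s k : cochain n f -> Nseq n s -> (k < n)%N -> nth 0 s k = 0 -> f s = 0.
Proof.
move=> Hf Hs Hk H0.
have := Hf k s 0 0 1 Hk Hs inN3_0 inN3_0.
have E : set_nth 0 s k (nth 0 s k) = s by apply: set_nth_id; rewrite Hs.1.
rewrite H0 in E.
rewrite scaler0 addr0 mul1r E.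
by move/(congr1 (fun z => z - f s)); rewrite subrr addrK => <-.
Qed.

Lemma lin0 m f (x y : M) s r : cochain m.+1 f -> Nseq m s -> inN3 x -> inN3 y ->
  f ((r *: x + y) :: s) = r * f (x :: s) + f (y :: s).
Proof.
move=> Hf Hs Hx Hy.
exact: (Hf 0%N (x :: s) x y r (ltn0Sn m) (NseqC Hx Hs) Hx Hy).
Qed.

Lemma zero0 m f s : cochain m.+1 f -> Nseq m s -> f (0 :: s) = 0.
Proof.
move=> Hf Hs; apply: (cochain_nth0 (k := 0%N) Hf) => //.
exact: NseqC inN3_0 Hs.
Qed.

Lemma scale0 m f (x : M) s r : cochain m.+1 f -> Nseq m s -> inN3 x ->
  f ((r *: x) :: s) = r * f (x :: s).
Proof.
move=> Hf Hs Hx.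
by rewrite -[r *: x]addr0 (lin0 _ Hf Hs Hx inN3_0) (zero0 Hf Hs) addr0.
Qed.

Lemma decomp_first m f (x : M) s : cochain m.+1 f -> Nseq m s -> inN3 x ->
  f (x :: s) = x i0 i0 * f (mI :: s) + x i0 i1 * f (mX :: s)
             + x i0 i2 * f (mZ :: s) + x i1 i2 * f (mY :: s).
Proof.
move=> Hf Hs Hx.
have L := lin0 _ Hf Hs.
rewrite {1}(decompN Hx).
rewrite L ?inN3_I //; last by rewrite !inN3_lin ?inN3_X ?inN3_Y ?inN3_Z ?inN3_0.
rewrite L ?inN3_X //; last by rewrite !inN3_lin ?inN3_X ?inN3_Y ?inN3_Z ?inN3_0.
rewrite L ?inN3_Z //; last by rewrite !inN3_lin ?inN3_X ?inN3_Y ?inN3_Z ?inN3_0.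
rewrite L ?inN3_Y ?inN3_0 // (zero0 Hf Hs).
by rewrite addr0 !addrA.
Qed.

Lemma cochain_add n f g : cochain n f -> cochain n g -> cochain n (fun s => f s + g s).
Proof. by move=> Hf Hg k s x y r Hk Hs Hx Hy /=; rewrite Hf // Hg //; ring. Qed.

Lemma cochain_scale n a f : cochain n f -> cochain n (fun s => a * f s).
Proof. by move=> Hf k s x y r Hk Hs Hx Hy /=; rewrite Hf //; ring. Qed.

Lemma cochain_zero n : cochain n (fun _ => 0 : R).
Proof. by move=> k s x y r Hk Hs Hx Hy /=; ring. Qed.

Lemma cochain_sub n f g : cochain n f -> cochain n g -> cochain n (fun s => f s - g s).
Proof. by move=> Hf Hg k s x y r Hk Hs Hx Hy /=; rewrite Hf // Hg //; ring. Qed.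

Lemma cochain_sum n (I : Type) (r : seq I) (F : I -> cochainT R) :
  (forall i, cochain n (F i)) -> cochain n (fun s => \sum_(i <- r) F i s).
Proof.
move=> HF; elim: r => [|a r IH].
  by move=> k s x y r0 Hk Hs Hx Hy /=; rewrite !big_nil; ring.
move=> k s x y r0 Hk Hs Hx Hy /=; rewrite !big_cons HF // IH //; ring.
Qed.

Lemma cochain_cup p q f g : cochain p f -> cochain q g -> cochain (p + q) (cup p f g).
Proof.
move=> Hf Hg k s x y r Hk Hs Hx Hy; rewrite /cup.
have Hks : (k < size s)%N by rewrite Hs.1.
case: (ltnP k p) => Hkp.
  rewrite !take_set_nth_lt // !drop_set_nth_lt //.
  rewrite (Hf k (take p s)) //; last by apply: (Nseq_take (n := p + q)) => //; rewrite leq_addr.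
  ring.
rewrite !take_set_nth_ge // !drop_set_nth_ge //.
rewrite (Hg (k - p)%N (drop p s)) //; first ring.
  by rewrite ltn_subLR.
exact: Nseq_drop.
Qed.

Definition phi (B : M) f : cochainT R := fun s => f (B :: s).

Lemma cochain_phi m (B : M) f : inN3 B -> cochain m.+1 f -> cochain m (phi B f).
Proof.
move=> HB Hf k s x y r Hk Hs Hx Hy.
exact: (Hf k.+1 (B :: s) x y r Hk (NseqC HB Hs) Hx Hy).
Qed.

Lemma cochain1 (e : M -> R) : (forall r x y, e (r *: x + y) = r * e x + e y) ->
  cochain 1 (fun s => e (nth 0 s 0)).
Proof.
move=> He [|k] s x y r Hk Hs Hx Hy //=.
by rewrite !nth_set_nth /= He.
Qed.

Lemma hoch_d_add n f g s : hoch_d n (fun t => f t + g t) s = hoch_d n f s + hoch_d n g s.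
Proof.
rewrite /hoch_d; under eq_bigr do rewrite mulrDr.
rewrite big_split /=; ring.
Qed.

Lemma hoch_d_scale n a f s : hoch_d n (fun t => a * f t) s = a * hoch_d n f s.
Proof.
rewrite /hoch_d; under eq_bigr do rewrite mulrCA.
rewrite -mulr_sumr; ring.
Qed.

Lemma hoch_d_zero n s : hoch_d n (fun _ => 0 : R) s = 0.
Proof. by rewrite /hoch_d big1 => [|i _]; rewrite ?mulr0 ?mul0r ?addr0. Qed.

Lemma hoch_d_sub n f g s : hoch_d n (fun t => f t - g t) s = hoch_d n f s - hoch_d n g s.
Proof.
rewrite /hoch_d; under eq_bigr do rewrite mulrBr.
rewrite sumrB /=; ring.
Qed.

Lemma hoch_d_ext n f g s : (forall t, Nseq n t -> f t = g t) -> Nseq n.+1 s ->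
  hoch_d n f s = hoch_d n g s.
Proof.
move=> Hfg Hs; rewrite /hoch_d.
rewrite (eq_bigr (fun i : 'I_n => (-1) ^+ i.+1 * g (mulat i s))); last first.
  by move=> i _; rewrite Hfg //; apply: Nseq_mulat.
rewrite Hfg; last exact: Nseq_behead.
rewrite Hfg //; exact: (Nseq_take (n := n.+1)).
Qed.

Lemma hoch_d_eq n f g s : (forall t, f t = g t) -> hoch_d n f s = hoch_d n g s.
Proof.
move=> Hfg; rewrite /hoch_d !Hfg.
by rewrite (eq_bigr (fun i : 'I_n => (-1) ^+ i.+1 * g (mulat i s))) // => i _; rewrite Hfg.
Qed.

Lemma hoch_d_sum n (I : Type) (r : seq I) (F : I -> cochainT R) s :
  hoch_d n (fun t => \sum_(i <- r) F i t) s = \sum_(i <- r) hoch_d n (F i) s.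
Proof.
elim: r => [|a r IH].
  transitivity (hoch_d n (fun _ => 0 : R) s).
    by apply: hoch_d_eq => t; rewrite big_nil.
  by rewrite hoch_d_zero big_nil.
rewrite big_cons -IH -hoch_d_add; apply: hoch_d_eq => t; by rewrite big_cons.
Qed.

Lemma cob_ext n f g : (forall s, Nseq n s -> f s = g s) -> coboundary n f -> coboundary n g.
Proof.
case: n => [|n] Hfg /=.
  by move=> H s Hs; rewrite -Hfg // H.
by case=> h [Hh E]; exists h; split => // s Hs; rewrite -Hfg // E.
Qed.

Lemma cob_add n f g : coboundary n f -> coboundary n g -> coboundary n (fun s => f s + g s).
Proof.
case: n => [|n] /=.
  by move=> H1 H2 s Hs; rewrite H1 // H2 // addr0.
case=> h1 [H1 E1] [h2 [H2 E2]]; exists (fun t => h1 t + h2 t); split.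
  exact: cochain_add.
by move=> s Hs; rewrite hoch_d_add E1 // E2.
Qed.

Lemma cob_scale n a f : coboundary n f -> coboundary n (fun s => a * f s).
Proof.
case: n => [|n] /=.
  by move=> H1 s Hs; rewrite H1 // mulr0.
case=> h1 [H1 E1]; exists (fun t => a * h1 t); split.
  exact: cochain_scale.
by move=> s Hs; rewrite hoch_d_scale E1.
Qed.

Lemma cob_zero n : coboundary n (fun _ => 0 : R).
Proof.
case: n => [|n] //=.
exists (fun _ => 0); split; first exact: cochain_zero.
by move=> s Hs; rewrite hoch_d_zero.
Qed.

Lemma cob_sub n f g : coboundary n f -> coboundary n g -> coboundary n (fun s => f s - g s).
Proof.
move=> H1 H2; apply: (cob_ext (f := fun s => f s + (-1) * g s)).
  by move=> s _; rewrite mulN1r.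
by apply: cob_add => //; apply: cob_scale.
Qed.

Lemma cob_sum n (I : Type) (r : seq I) (F : I -> cochainT R) :
  (forall i, coboundary n (F i)) -> coboundary n (fun s => \sum_(i <- r) F i s).
Proof.
move=> HF; elim: r => [|a r IH].
  by apply: (cob_ext (f := fun _ => 0)); [move=> s _; rewrite big_nil | apply: cob_zero].
apply: (cob_ext (f := fun s => F a s + \sum_(i <- r) F i s)).
  by move=> s _; rewrite big_cons.
exact: cob_add.
Qed.

Lemma cocycle_add n f g : cocycle n f -> cocycle n g -> cocycle n (fun s => f s + g s).
Proof.
move=> [Hf Ef] [Hg Eg]; split; first exact: cochain_add.
by move=> s Hs; rewrite hoch_d_add Ef // Eg // addr0.
Qed.

Lemma cocycle_scale n a f : cocycle n f -> cocycle n (fun s => a * f s).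
Proof.
move=> [Hf Ef]; split; first exact: cochain_scale.
by move=> s Hs; rewrite hoch_d_scale Ef // mulr0.
Qed.

Lemma cocycle_sub n f g : cocycle n f -> cocycle n g -> cocycle n (fun s => f s - g s).
Proof.
move=> [Hf Ef] [Hg Eg]; split; first exact: cochain_sub.
by move=> s Hs; rewrite hoch_d_sub Ef // Eg // subr0.
Qed.

Lemma cocycle_sum n (I : Type) (r : seq I) (F : I -> cochainT R) :
  (forall i, cocycle n (F i)) -> cocycle n (fun s => \sum_(i <- r) F i s).
Proof.
move=> HF; split; first by apply: cochain_sum => i; case: (HF i).
move=> s Hs; rewrite hoch_d_sum big1 // => i _.
by case: (HF i) => _ ->.
Qed.

Lemma behead_take p (s : seq M) : behead (take p.+1 s) = take p (behead s).
Proof. by case: s. Qed.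
Lemma drop_beh p (s : seq M) : drop p (behead s) = drop p.+1 s.
Proof. by case: s. Qed.
Lemma beh_drop p (s : seq M) : behead (drop p s) = drop p.+1 s.
Proof. by rewrite -drop1 drop_drop add1n. Qed.

Lemma leibniz p q f g s : size s = (p + q).+1 ->
  hoch_d (p + q) (cup p f g) s
  = cup p.+1 (hoch_d p f) g s + (-1) ^+ p * cup p f (hoch_d q g) s.
Proof.
move=> Hs; rewrite /hoch_d /cup.
have Hps : (p <= size s)%N by rewrite Hs (leq_trans (leq_addr q p)) // addnC leqnSn.
rewrite big_split_ord /=.
have E1 : \sum_(i < p) (-1) ^+ (lshift q i).+1 *
      (f (take p (mulat (lshift q i) s)) * g (drop p (mulat (lshift q i) s)))
    = (\sum_(i < p) (-1) ^+ i.+1 * f (mulat i (take p.+1 s))) * g (drop p.+1 s).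
  rewrite mulr_suml; apply: eq_bigr => i _ /=.
  by rewrite take_mulat_lt // drop_mulat_lt // mulrA.
have E2 : \sum_(i < q) (-1) ^+ (rshift p i).+1 *
      (f (take p (mulat (rshift p i) s)) * g (drop p (mulat (rshift p i) s)))
    = (-1) ^+ p * (f (take p s) * \sum_(i < q) (-1) ^+ i.+1 * g (mulat i (drop p s))).
  rewrite !mulr_sumr; apply: eq_bigr => i _ /=.
  rewrite take_mulat_ge // drop_mulat_ge // -addnS exprD; ring.
rewrite E1 E2; clear E1 E2.
rewrite behead_take drop_beh (nth_take _ (ltn0Sn p)) (nth_take _ (ltnSn p)) take_takel ?leq_addr // (nth_drop p 0 s 0) (nth_drop p 0 s q) addn0 beh_drop take_takel // drop_take_add. rewrite -addnS exprD !exprS. ring. Qed.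

Lemma sign_sq p : (-1) ^+ p * (-1) ^+ p = 1 :> R.
Proof. elim: p => [|p IH]; first by rewrite mulr1. by rewrite exprS mulN1r mulrNN IH. Qed.

Lemma cocycle_cup p q f g : cocycle p f -> cocycle q g -> cocycle (p + q) (cup p f g).
Proof.
move=> [Hf Ef] [Hg Eg]; split; first exact: cochain_cup.
move=> s Hs; rewrite leibniz; last by rewrite Hs.1.
rewrite /cup Ef ?mul0r; last by apply: (Nseq_take (n := (p + q).+1)) => //; rewrite ltnS leq_addr.
rewrite Eg ?mulr0 ?addr0 //; apply: Nseq_drop; by rewrite addnS.
Qed.

Lemma cob_cup_r p q f g : cocycle p f -> coboundary q g -> coboundary (p + q) (cup p f g).
Proof.
move=> [Hf Ef]; case: q => [|q] Hg.
  apply: (cob_ext (f := fun _ => 0)); last exact: cob_zero.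
  move=> s Hs; rewrite /cup Hg ?mulr0 //; apply: Nseq_drop; exact: Hs.
case: Hg => h [Hh Eh]; rewrite addnS /=.
exists (fun s => (-1) ^+ p * cup p f h s); split.
  by apply: cochain_scale; apply: cochain_cup.
move=> s Hs; rewrite hoch_d_scale leibniz; last by rewrite Hs.1.
rewrite /cup Ef ?mul0r ?add0r; last by apply: (Nseq_take (n := (p + q).+1)) => //; rewrite ltnS leq_addr.
rewrite Eh; last by apply: Nseq_drop; rewrite addnS.
by rewrite mulrA sign_sq mul1r.
Qed.

Lemma cob_cup_l p q f g : coboundary p f -> cocycle q g -> coboundary (p + q) (cup p f g).
Proof.
move=> + [Hg Eg]; case: p => [|p] Hf.
  apply: (cob_ext (f := fun _ => 0)); last exact: cob_zero.
  by move=> s Hs; rewrite /cup take0 Hf ?mul0r.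
case: Hf => h [Hh Eh]; rewrite addSn /=.
exists (cup p h g); split; first exact: cochain_cup.
move=> s Hs; rewrite leibniz; last by rewrite Hs.1.
rewrite /cup Eg ?mulr0 ?addr0; last by apply: Nseq_drop; rewrite addnS.
rewrite Eh //; apply: (Nseq_take (n := (p + q).+1)) => //; by rewrite ltnS leq_addr.
Qed.

Lemma cup_assoc p q f g h s : cup (p + q) (cup p f g) h s = cup p f (cup q g h) s.
Proof.
by rewrite /cup take_takel ?leq_addr // drop_take_add drop_drop (addnC q p) mulrA.
Qed.

Definition gammaC : cochainT R := fun s => (nth 0 s 0) i0 i2.
Definition epsC : cochainT R := fun s => (nth 0 s 0) i0 i0.

Lemma cochain_alpha : cochain 1 (@alphaC R).
Proof. by apply: (cochain1 (e := fun x : M => x i0 i1)) => r x y; rewrite !mxE. Qed.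
Lemma cochain_beta : cochain 1 (@betaC R).
Proof. by apply: (cochain1 (e := fun x : M => x i1 i2)) => r x y; rewrite !mxE. Qed.
Lemma cochain_gamma : cochain 1 gammaC.
Proof. by apply: (cochain1 (e := fun x : M => x i0 i2)) => r x y; rewrite !mxE. Qed.

Lemma Nseq2 (s : seq M) : Nseq 2 s -> exists x y, [/\ s = [:: x; y], inN3 x & inN3 y].
Proof.
case: s => [|x [|y [|z t]]] [//= Hs Ha].
by move: Ha => /= /and3P [Hx Hy _]; exists x, y.
Qed.

Lemma hoch_d1 f (x y : M) : hoch_d 1 f [:: x; y] = diagN x * f [:: y] - f [:: x *m y] + f [:: x] * diagN y.
Proof.
by rewrite /hoch_d big_ord_recl big_ord0 /= mulat0 addr0 expr1 expr2 mulrNN !mul1r mulN1r. Qed.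

Lemma cocycle_alpha : cocycle 1 (@alphaC R).
Proof.
split; first exact: cochain_alpha.
move=> s /Nseq2 [x [y [-> /inN3P [h1 h2 h3 h4 h5] /inN3P [g1 g2 g3 g4 g5]]]].
rewrite hoch_d1 /alphaC /diagN /= mulE ?h1 ?h2 ?h3 ?h4 ?h5 ?g1 ?g2 ?g3 ?g4 ?g5. ring.
Qed.

Lemma cocycle_beta : cocycle 1 (@betaC R).
Proof.
split; first exact: cochain_beta.
move=> s /Nseq2 [x [y [-> /inN3P [h1 h2 h3 h4 h5] /inN3P [g1 g2 g3 g4 g5]]]].
rewrite hoch_d1 /betaC /diagN /= mulE ?h1 ?h2 ?h3 ?h4 ?h5 ?g1 ?g2 ?g3 ?g4 ?g5. ring.
Qed.

Lemma dgamma s : Nseq 2 s -> hoch_d 1 gammaC s = - cup 1 (@alphaC R) (@betaC R) s.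
Proof.
move=> /Nseq2 [x [y [-> /inN3P [h1 h2 h3 h4 h5] /inN3P [g1 g2 g3 g4 g5]]]].
rewrite hoch_d1 /cup /alphaC /betaC /gammaC /diagN /= mulE ?h1 ?h2 ?h3 ?h4 ?h5 ?g1 ?g2 ?g3 ?g4 ?g5. ring.
Qed.

Lemma cocycle_letter b : cocycle 1 (@letterC R b).
Proof. case: b; [exact: cocycle_alpha | exact: cocycle_beta]. Qed.

Lemma cocycle_one : cocycle 0 (@one_cochain R).
Proof.
split; first by move=> k s x y r.
move=> s Hs; rewrite /hoch_d big_ord0 /one_cochain /=; ring.
Qed.

Lemma cocycle_word (w : seq bool) : cocycle (size w) (@wordC R w).
Proof.
elim: w => [|b w IH]; first exact: cocycle_one.
exact: (cocycle_cup (cocycle_letter b) IH).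
Qed.

Lemma cocycle_PhiC m (c : m.-tuple bool -> R) : cocycle m (PhiC c).
Proof.
rewrite /PhiC; apply: cocycle_sum => w.
apply: cocycle_scale; have := cocycle_word w; by rewrite size_tuple.
Qed.

Lemma cob_ab : coboundary 2 (cup 1 (@alphaC R) (@betaC R)).
Proof.
exists (fun s => (-1) * gammaC s); split; first exact: cochain_scale cochain_gamma.
by move=> s Hs; rewrite hoch_d_scale dgamma // mulN1r opprK.
Qed.

Lemma cob_word_infix (w : seq bool) : infix [:: true; false] w -> coboundary (size w) (@wordC R w).
Proof.
elim: w => [|b w IH] //.
rewrite infix_consl => /orP [Hp|Hi]; last first.
  exact: (cob_cup_r (cocycle_letter b) (IH Hi)).
case: b Hp => //; case: w {IH} => [|b v] //=; case: b => //= _.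
have H := cob_cup_l cob_ab (cocycle_word v).
apply: (cob_ext _ H) => s _.
exact: (cup_assoc 1 1).
Qed.

Lemma cob_PhiC_ideal m (c : m.-tuple bool -> R) : in_ideal_ab c -> coboundary m (PhiC c).
Proof.
move=> Hc; rewrite /PhiC; apply: cob_sum => w.
case: (eqVneq (c w) 0) => Hw.
  by apply: (cob_ext (f := fun _ => 0)); [move=> s _; rewrite Hw mul0r | apply: cob_zero].
apply: cob_scale; have := cob_word_infix (Hc w Hw); by rewrite size_tuple.
Qed.

Definition yx i j : seq M := nseq i mY ++ nseq j mX.

Lemma Nseq_yx i j : Nseq (i + j) (yx i j).
Proof.
split; first by rewrite size_cat !size_nseq.
by rewrite all_cat !all_nseq inN3_X inN3_Y !orbT.
Qed.

Lemma cup1_cons F G (x : M) t : cup 1 F G (x :: t) = F [:: x] * G t.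
Proof. by rewrite /cup /= take0 drop0. Qed.

Lemma yxS i j : yx i.+1 j = mY :: yx i j. Proof. by []. Qed.
Lemma yx0S j : yx 0 j.+1 = mX :: yx 0 j. Proof. by []. Qed.

Lemma letterY b : @letterC R b [:: mY] = (~~ b)%:R.
Proof. by case: b; rewrite /letterC /alphaC /betaC /= mxE. Qed.
Lemma letterX b : @letterC R b [:: mX] = b%:R.
Proof. by case: b; rewrite /letterC /alphaC /betaC /= mxE. Qed.

Lemma wordC_yx (w : seq bool) i j : size w = (i + j)%N ->
  wordC w (yx i j) = (w == ba_word i j)%:R.
Proof.
elim: w i j => [|b w IH] [|i] [|j] // Hs.
- rewrite yx0S /= cup1_cons letterX (IH 0%N j); last by move: Hs => [].
  by rewrite /ba_word /= eqseq_cons; case: (b); rewrite ?mul1r ?mul0r.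
- rewrite yxS /= cup1_cons letterY (IH i 0%N); last by move: Hs; rewrite addn0 => [[]]; rewrite addn0.
  by rewrite /ba_word /= eqseq_cons; case: (b); rewrite ?mul1r ?mul0r.
- rewrite yxS /= cup1_cons letterY (IH i j.+1); last by move: Hs => [].
  by rewrite /ba_word /= eqseq_cons; case: (b); rewrite ?mul1r ?mul0r.
Qed.

Lemma yx_nth i j k : nth 0 (yx i j) k = if (k < i)%N then mY else if (k < i + j)%N then mX else 0.
Proof.
rewrite /yx nth_cat size_nseq; case: ltnP => H; first by rewrite nth_nseq H.
by rewrite nth_nseq ltn_subLR.
Qed.

Lemma prod_yx i j k : nth 0 (yx i j) k *m nth 0 (yx i j) k.+1 = 0.
Proof.
rewrite !yx_nth.
have [H1|H1] := ltnP k i.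
  case: ifP => _; first exact: mulYY.
  by case: ifP => _; [exact: mulYX | rewrite mulmx0].
have H2 : (k.+1 < i)%N = false by apply/negbTE; rewrite -leqNgt (leq_trans H1).
rewrite H2.
case: ifP => _; last by rewrite mul0mx.
by case: ifP => _; [exact: mulXX | rewrite mulmx0].
Qed.

Lemma nth_mulat (s : seq M) k : (k <= size s)%N -> nth 0 (mulat k s) k = nth 0 s k *m nth 0 s k.+1.
Proof. by move=> Hk; rewrite /mulat nth_cat size_takel // ltnn subnn. Qed.

Lemma cob_yx n F i j : coboundary n F -> (i + j)%N = n -> F (yx i j) = 0.
Proof.
case: n => [|n].
  by case: i => [|i] // ; case: j => [|j] // H _; apply: H.
case=> h [Hh E] Hij.
have Ht := Nseq_yx i j; rewrite Hij in Ht.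
rewrite E // /hoch_d big1; last first.
  move=> k _; rewrite (cochain_nth0 (k := k) Hh) ?mulr0 //; first exact: Nseq_mulat.
  by rewrite nth_mulat ?prod_yx // Ht.1 ltnW // ltnS ltnW.
have D k : diagN (nth 0 (yx i j) k) = 0.
  by rewrite /diagN yx_nth; case: ifP => _; [rewrite mxE | case: ifP => _; rewrite mxE].
by rewrite !D; ring.
Qed.

Lemma PhiC_yx m (c : m.-tuple bool -> R) i j (w : m.-tuple bool) :
  tval w = ba_word i j -> (i + j)%N = m -> PhiC c (yx i j) = c w.
Proof.
move=> Hw Hij; rewrite /PhiC (bigD1 w) //= wordC_yx ?size_tuple // Hw eqxx mulr1.
rewrite big1 ?addr0 // => w' Hw'.
rewrite wordC_yx ?size_tuple // -Hw val_eqE (negbTE Hw') mulr0 //.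
Qed.

Lemma noinfix_ba (w : seq bool) : ~~ infix [:: true; false] w -> exists i j, w = ba_word i j.
Proof.
elim: w => [|b w IH]; first by exists 0%N, 0%N.
rewrite infix_consl negb_or => /andP [Hp Hi].
case: (IH Hi) => i [j Ew]; subst w; clear IH.
case: b Hp => Hp.
  case: i Hp Hi => [|i] Hp Hi; first by exists 0%N, j.+1.
  by move: Hp; rewrite /ba_word /=; case: (_ ++ _).
by exists i.+1, j.
Qed.

Lemma ideal_of_cob m (c : m.-tuple bool -> R) : coboundary m (PhiC c) -> in_ideal_ab c.
Proof.
move=> H w Hw; apply/negPn/negP => Hn.
have [i [j E]] := noinfix_ba Hn.
have Hij : (i + j)%N = m.
  by rewrite -(size_tuple w) E /ba_word size_cat !size_nseq.
by move: Hw; rewrite -(PhiC_yx c E Hij) (cob_yx H Hij) eqxx.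
Qed.

Lemma hoch_d_cons m f (x : M) s :
  hoch_d m.+1 f (x :: s) = diagN x * f s - f ((x *m nth 0 s 0) :: behead s)
    + diagN (nth 0 s 0) * f (x :: behead s) - hoch_d m (phi x f) s.
Proof.
rewrite /hoch_d big_ord_recl /phi /=.
have -> : mulat 0 (x :: s) = (x *m nth 0 s 0) :: behead s.
  by rewrite /mulat /= drop1.
rewrite (eq_bigr (fun i : 'I_m => - ((-1) ^+ i.+1 * f (x :: mulat i s)))); last first.
  by move=> i _; rewrite /bump /= mulatS exprS mulN1r mulNr.
rewrite sumrN expr1 (exprS _ m.+1) mulN1r.
ring.
Qed.

Lemma PhiC_split m (c : m.+1.-tuple bool -> R) s :
  PhiC c s = cup 1 (@alphaC R) (PhiC (fun w : m.-tuple bool => c [tuple of true :: w])) s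
           + cup 1 (@betaC R) (PhiC (fun w : m.-tuple bool => c [tuple of false :: w])) s.
Proof.
rewrite /PhiC [in RHS]/cup.
rewrite (reindex (fun p : bool * m.-tuple bool => [tuple of p.1 :: p.2])) /=; last first.
  apply: onW_bij; exists (fun w : m.+1.-tuple bool => (thead w, [tuple of behead w])).
  - by case=> b w; rewrite theadE; congr pair; apply: val_inj.
  - by move=> w; rewrite [RHS]tuple_eta.
rewrite -(pair_big xpredT xpredT (fun b (w : m.-tuple bool) => c [tuple of b :: w] * cup 1 (letterC b) (wordC w) s)) /=.
rewrite big_bool /= !mulr_sumr.
congr (_ + _); apply: eq_bigr => w _; rewrite /cup /letterC; ring.
Qed.

Lemma NseqS_inv n (s : seq M) : Nseq n.+1 s -> exists x t, [/\ s = x :: t, inN3 x & Nseq n t].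
Proof. by case: s => [[]//|x t] /NseqCi [Hx Ht]; exists x, t. Qed.

Lemma PhiC_ext m (c1 c2 : m.-tuple bool -> R) s : (forall w, c1 w = c2 w) -> PhiC c1 s = PhiC c2 s.
Proof. by move=> H; apply: eq_bigr => w _; rewrite H. Qed.

Lemma step_aux m (f A K B G0 : cochainT R) : cochain m A -> cochain m G0 -> cocycle m K ->
  coboundary m K -> cocycle m B ->
  (forall s, Nseq m.+1 s -> hoch_d m A s = - cup 1 (@betaC R) K s) ->
  (forall s, Nseq m.+1 s -> f s = hoch_d m G0 s + cup 1 (@alphaC R) A s
                                 + cup 1 gammaC K s + cup 1 (@betaC R) B s) ->
  exists A', cocycle m A' /\
    coboundary m.+1 (fun s => f s - (cup 1 (@alphaC R) A' s + cup 1 (@betaC R) B s)).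
Proof.
case: m => [|n] HA HG [HK EK] HKc HB dA Hdec.
  have HK0 : forall s, Nseq 0 s -> K s = 0 := HKc.
  exists A; split.
    split => // s Hs; rewrite dA //.
    have [x [t [-> Hx Ht]]] := NseqS_inv Hs.
    by rewrite cup1_cons HK0 ?mulr0 ?oppr0.
  exists G0; split => // s Hs; rewrite Hdec //.
  have [x [t [-> Hx Ht]]] := NseqS_inv Hs.
  rewrite !cup1_cons HK0 //; ring.
case: HKc => h [Hh Eh].
have Hbh : cochain n.+1 (cup 1 (@betaC R) h) := cochain_cup cochain_beta Hh.
have Hgh : cochain n.+1 (cup 1 gammaC h) := cochain_cup cochain_gamma Hh.
have Lb : forall s, Nseq n.+2 s -> hoch_d n.+1 (cup 1 (@betaC R) h) s = - cup 1 (@betaC R) K s.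
  move=> s Hs; rewrite (leibniz (p := 1) (q := n)); last by rewrite Hs.1.
  rewrite /cup (proj2 cocycle_beta); last by apply: (Nseq_take (n := n.+2)).
  rewrite -Eh; last by apply: (Nseq_drop (p := 1)).
  ring.
have Lg : forall s, Nseq n.+2 s -> hoch_d n.+1 (cup 1 gammaC h) s
    = - cup 1 (@alphaC R) (cup 1 (@betaC R) h) s - cup 1 gammaC K s.
  move=> s Hs; rewrite (leibniz (p := 1) (q := n)); last by rewrite Hs.1.
  rewrite -(cup_assoc 1 1) {1}/cup dgamma; last by apply: (Nseq_take (n := n.+2)).
  rewrite {2}/cup -Eh; last by apply: (Nseq_drop (p := 1)).
  rewrite /cup; ring.
exists (fun s => A s - cup 1 (@betaC R) h s); split.
  split; first exact: cochain_sub.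
  by move=> s Hs; rewrite hoch_d_sub dA // Lb // opprK addNr.
exists (fun s => G0 s - cup 1 gammaC h s); split; first exact: cochain_sub.
move=> s Hs; rewrite hoch_d_sub Lg // Hdec //.
rewrite /cup; ring.
Qed.

Lemma rel_phi m f (x : M) s : cocycle m.+1 f -> inN3 x -> Nseq m.+1 s ->
  hoch_d m (phi x f) s = diagN x * f s - f ((x *m nth 0 s 0) :: behead s)
                        + diagN (nth 0 s 0) * f (x :: behead s).
Proof.
move=> [Hf Ef] Hx Hs.
have := Ef (x :: s) (NseqC Hx Hs); rewrite hoch_d_cons => H0.
rewrite -[LHS]add0r -H0; ring.
Qed.

Definition Surj m := forall f, cocycle m f ->
  exists c : m.-tuple bool -> R, coboundary m (fun s => f s - PhiC c s).

Lemma surj_step m : Surj m -> Surj m.+1.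
Proof.
move=> IH f Hfc; have [Hf Ef] := Hfc.
pose A := phi mX f; pose K := phi mZ f; pose B := phi mY f; pose G0 := phi mI f.
have HA : cochain m A := cochain_phi inN3_X Hf.
have HK : cochain m K := cochain_phi inN3_Z Hf.
have HB : cochain m B := cochain_phi inN3_Y Hf.
have HG : cochain m G0 := cochain_phi inN3_I Hf.
have Kc : cocycle m K.
  split => // s Hs; rewrite /K rel_phi ?inN3_Z //.
  have [x [t [-> Hx Ht]]] := NseqS_inv Hs.
  rewrite /= mulZN // (scale0 _ Hf Ht inN3_Z) /diagN mxE /=; ring.
have Bc : cocycle m B.
  split => // s Hs; rewrite /B rel_phi ?inN3_Y //.
  have [x [t [-> Hx Ht]]] := NseqS_inv Hs.
  rewrite /= mulYN // (scale0 _ Hf Ht inN3_Y) /diagN mxE /=; ring.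
have dA : forall s, Nseq m.+1 s -> hoch_d m A s = - cup 1 (@betaC R) K s.
  move=> s Hs; rewrite /A rel_phi ?inN3_X //.
  have [x [t [-> Hx Ht]]] := NseqS_inv Hs.
  rewrite /= mulXN // -[_ *: mZ]addr0 (lin0 _ Hf Ht inN3_X) ?inN3_lin ?inN3_Z ?inN3_0 //.
  rewrite (lin0 _ Hf Ht inN3_Z inN3_0) (zero0 Hf Ht).
  rewrite cup1_cons /K /phi /betaC /diagN mxE /=; ring.
have Hdec : forall s, Nseq m.+1 s -> f s = hoch_d m G0 s + cup 1 (@alphaC R) A s
                                 + cup 1 gammaC K s + cup 1 (@betaC R) B s.
  move=> s Hs; rewrite /G0 rel_phi ?inN3_I //.
  have [x [t [-> Hx Ht]]] := NseqS_inv Hs.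
  rewrite /= mulIN (decomp_first Hf Ht Hx) !cup1_cons /A /K /B /phi /diagN /alphaC /betaC /gammaC !mxE /=.
  ring.
have HbK : coboundary m.+1 (cup 1 (@betaC R) K).
  exists (fun s => (-1) * A s); split; first exact: cochain_scale.
  by move=> s Hs; rewrite hoch_d_scale dA // mulN1r opprK.
have [cK HcK] := IH K Kc.
have Hid : in_ideal_ab cK.
  move=> w Hw; apply/negPn/negP => Hn.
  have [i [j E]] := noinfix_ba Hn.
  have Hij : (i + j)%N = m by rewrite -(size_tuple w) E /ba_word size_cat !size_nseq.
  have e1 := cob_yx HbK (i := i.+1) (j := j); rewrite addSn Hij in e1.
  have {e1} e1 := e1 erefl; rewrite yxS cup1_cons /betaC mxE /= mul1r in e1.
  have e2 := cob_yx HcK Hij; rewrite /= e1 sub0r (PhiC_yx cK E Hij) in e2.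
  by move: Hw; rewrite -oppr_eq0 e2 eqxx.
have HKcob : coboundary m K.
  apply: (cob_ext _ (cob_add HcK (cob_PhiC_ideal Hid))) => s _; ring.
have [A' [HA'c Hf']] := step_aux HA HG Kc HKcob Bc dA Hdec.
have [cA HcA] := IH A' HA'c.
have [cB HcB] := IH B Bc.
exists (fun w : m.+1.-tuple bool => if thead w then cA [tuple of behead w] else cB [tuple of behead w]).
have X2 := cob_cup_r cocycle_alpha HcA.
have X3 := cob_cup_r cocycle_beta HcB.
apply: (cob_ext _ (cob_add Hf' (cob_add X2 X3))) => s _ /=.
have E1 : forall t, PhiC (fun w : m.-tuple bool => if thead [tuple of true :: w]
         then cA [tuple of behead [tuple of true :: w]]
         else cB [tuple of behead [tuple of true :: w]]) t = PhiC cA t.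
  by move=> t; apply: PhiC_ext => w /=; congr cA; apply: val_inj.
have E2 : forall t, PhiC (fun w : m.-tuple bool => if thead [tuple of false :: w]
         then cA [tuple of behead [tuple of false :: w]]
         else cB [tuple of behead [tuple of false :: w]]) t = PhiC cB t.
  by move=> t; apply: PhiC_ext => w /=; congr cB; apply: val_inj.
rewrite PhiC_split /cup E1 E2; ring.
Qed.

Lemma surj0 : Surj 0.
Proof.
move=> f Hf; exists (fun _ => f [::]) => s [Hs _].
move/size0nil: Hs => ->.
rewrite /PhiC (bigD1 [tuple]) //= big1 => [|w Hw]; last by exfalso; move: Hw; rewrite (tuple0 w) => /negP; apply; apply: eqxx.
by rewrite addr0 /one_cochain mulr1 subrr.
Qed.

Lemma surj_all m : Surj m.
Proof. elim: m => [|m IH]; [exact: surj0 | exact: surj_step]. Qed.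

Lemma size_ba i j : size (ba_word i j) = (i + j)%N.
Proof. by rewrite /ba_word size_cat !size_nseq. Qed.

Definition ba_tuple m (i : 'I_m.+1) : m.-tuple bool :=
  @Tuple m bool (ba_word i (m - i)) (introT eqP (etrans (size_ba _ _) (subnKC (ltnSE (ltn_ord i))))).

Lemma count_ba i j : count negb (ba_word i j) = i.
Proof. by rewrite /ba_word count_cat !count_nseq /= mul1n mul0n addn0. Qed.

Lemma noinfix_true j : ~~ infix [:: true; false] (nseq j true).
Proof.
elim: j => [|j IH] //.
rewrite [nseq _ _]/= infix_consl negb_or IH andbT.
by case: j {IH}.
Qed.

Lemma ba_noinfix i j : ~~ infix [:: true; false] (ba_word i j).
Proof.
elim: i => [|i IH]; first exact: noinfix_true.
rewrite /ba_word [nseq _ _ ++ _]/= infix_consl negb_or.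
by move: IH; rewrite /ba_word => ->.
Qed.

Lemma sum_ba m (G : m.-tuple bool -> R) :
  \sum_(w : m.-tuple bool | ~~ infix [:: true; false] w) G w = \sum_(i < m.+1) G (ba_tuple i).
Proof.
rewrite (reindex (@ba_tuple m)) /=.
  by apply: eq_bigl => i; rewrite ba_noinfix.
exists (fun w : m.-tuple bool => inord (count negb w)).
  by move=> i _; apply: val_inj; rewrite /= count_ba inordK.
move=> w; rewrite inE => Hw.
have [a [b E]] := noinfix_ba Hw.
have Hab : (a + b)%N = m by rewrite -(size_tuple w) E size_ba.
apply: val_inj; rewrite /= E count_ba inordK; last by rewrite ltnS -Hab leq_addr.
by rewrite -Hab addKn.
Qed.

Lemma PhiC_ba m (c : m.-tuple bool -> R) s :
  PhiC c s = PhiC (fun w => if infix [:: true; false] w then c w else 0) s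
           + \sum_(i < m.+1) c (ba_tuple i) * wordC (ba_word i (m - i)) s.
Proof.
rewrite -(sum_ba (fun w => c w * wordC w s)) /PhiC.
rewrite [X in _ + X]big_mkcond -big_split /=.
apply: eq_bigr => w _; case: ifP => _ /=; ring.
Qed.

Lemma wordC_ba_yx m (i k : 'I_m.+1) :
  @wordC R (ba_word i (m - i)) (yx k (m - k)) = (i == k)%:R.
Proof.
rewrite wordC_yx; last by rewrite size_ba !subnKC // -ltnS.
congr (_%:R); case: (eqVneq i k) => [->|Hik]; first by rewrite !eqxx.
case E: (ba_word _ _ == _) => //; move/eqP: E => E; exfalso; move/eqP: Hik; apply; apply: val_inj.
transitivity (count negb (ba_word i (m - i))); first by rewrite count_ba. by rewrite E count_ba.
Qed.

End Mat.
End Aux.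
Import Aux.

Theorem lemma5p3 (R : comPzRingType) :
  (* H^*(N,T) with the cup product is a graded associative R-algebra *)
  ((forall (p q : nat) (f g : cochainT R),
      cocycle p f -> cocycle q g -> cocycle (p + q) (cup p f g)) /\
   (forall (p q : nat) (f g : cochainT R),
      cocycle p f -> cocycle q g -> coboundary q g -> coboundary (p + q) (cup p f g)) /\
   (forall (p q : nat) (f g : cochainT R),
      cocycle p f -> coboundary p f -> cocycle q g -> coboundary (p + q) (cup p f g)) /\
   (forall (p q : nat) (f g h : cochainT R) (s : seq 'M[R]_3),
      cup (p + q) (cup p f g) h s = cup p f (cup q g h) s) /\
   cocycle 1 (@alphaC R) /\ cocycle 1 (@betaC R)) /\
  (* R<alpha,beta>/(alpha beta) -> H^*(N,T) is an isomorphism in every degree m *)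
  (forall (m : nat),
     (forall c : m.-tuple bool -> R, cocycle m (PhiC c)) /\
     (forall f : cochainT R, cocycle m f ->
        exists c : m.-tuple bool -> R, coboundary m (fun s => f s - PhiC c s)) /\
     (forall c : m.-tuple bool -> R, coboundary m (PhiC c) <-> in_ideal_ab c)) /\
  (* in particular H^m is free with basis beta^i alpha^j, i + j = m *)
  (forall (m : nat),
     (forall f : cochainT R, cocycle m f ->
        exists c : 'I_m.+1 -> R,
          coboundary m (fun s => f s - \sum_(i < m.+1) c i * wordC (ba_word i (m - i)) s)) /\
     (forall c : 'I_m.+1 -> R,
        coboundary m (fun s => \sum_(i < m.+1) c i * wordC (ba_word i (m - i)) s) ->
        forall i, c i = 0)).
Proof.
split.
  split; first by move=> p q f g Hf Hg; exact: cocycle_cup.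
  split; first by move=> p q f g Hf Hg Hgc; exact: cob_cup_r.
  split; first by move=> p q f g Hf Hfc Hg; exact: cob_cup_l.
  split; first by move=> p q f g h s; exact: cup_assoc.
  split; [exact: cocycle_alpha | exact: cocycle_beta].
split.
  move=> m; split; first exact: cocycle_PhiC.
  split; first exact: surj_all.
  by move=> c; split; [exact: ideal_of_cob | exact: cob_PhiC_ideal].
move=> m; split.
  move=> f Hf; have [c0 Hc0] := surj_all Hf.
  exists (fun i => c0 (ba_tuple i)).
  have Hid : in_ideal_ab (fun w : m.-tuple bool => if infix [:: true; false] w then c0 w else 0).
    by move=> w; case: ifP => // _; rewrite eqxx.
  apply: (cob_ext _ (cob_add Hc0 (cob_PhiC_ideal Hid))) => s _ /=.
  rewrite (PhiC_ba c0 s); ring.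
move=> c H i.
have Hi : (i + (m - i))%N = m by rewrite subnKC // -ltnS.
have := cob_yx H Hi.
rewrite (bigD1 i) //= big1 => [|k Hk].
  by rewrite wordC_ba_yx eqxx mulr1 addr0.
by rewrite wordC_ba_yx (negbTE Hk) mulr0.
Qed.
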